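(* Let $X=\{\ell,r,s\}$ be a te-set such that $\{\ell,r\}$ is a tu-set and $|\operatorname{supp}(z)|\geq2$ for all $z\in X$. Let $j\in\operatorname{supp}(r)\cap\operatorname{supp}(\ell)$, and let $r',s'$ be the rows of $X/(\ell,j)$ corresponding to $r$ and $s$ (where $(\ell,j)$ denotes the pivot at the row $\ell$ and column $j$). If $\operatorname{supp}(r')=\operatorname{supp}(s')$, then either $\{r,s\}$ or $\{\ell,r,s\}$ is a te-lace.
   Context: A set of vectors is identified with the matrix whose rows are these vectors; $\operatorname{supp}(x)$ is the set of nonzero coordinates of $x$. A matrix is totally equimodular if every set of linearly independent rows forms a matrix of full row rank whose nonzero maximal minors all have the same absolute value, and totally unimodular if all its square submatrices have determinant in $\{0,\pm1\}$. A linearly independent set of $\{0,\pm1\}$-vectors is a te-set if its matrix is totally equimodular, a tu-set if its matrix is totally unimodular, and a te-lace if it is a te-set, not a tu-set, and all its proper subsets are tu-sets. For a position $(i,j)$ with $A_i^j\neq0$, $A/(i,j)$ is obtained from $A$ by dividing row $i$ by $A_i^j$ and adding suitable multiples of this row to the other rows so that column $j$ becomes the $i$-th unit vector. *)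

(* Defs.v *)
From mathcomp Require Import all_boot all_order all_algebra.
Set Implicit Arguments. Unset Strict Implicit. Unset Printing Implicit Defensive.
Import Order.TTheory GRing.Theory Num.Theory.
Local Open Scope ring_scope.

(* Vectors are rows over the field rat; a finite set of vectors is identified
   with the matrix whose rows are these vectors. *)

Definition pm01 (m n : nat) (A : 'M[rat]_(m, n)) : Prop :=
  forall i j, A i j = 0 \/ A i j = 1 \/ A i j = -1.

Definition totally_unimodular (m n : nat) (A : 'M[rat]_(m, n)) : Prop :=
  forall (k : nat) (f : 'I_k -> 'I_m) (g : 'I_k -> 'I_n),
    let d := \det (mxsub f g A) in d = 0 \/ d = 1 \/ d = -1.

Definition totally_equimodular (m n : nat) (A : 'M[rat]_(m, n)) : Prop :=
  forall (k : nat) (f : 'I_k -> 'I_m), injective f ->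
    row_free (rowsub f A) ->
    forall g1 g2 : 'I_k -> 'I_n,
      \det (colsub g1 (rowsub f A)) != 0 ->
      \det (colsub g2 (rowsub f A)) != 0 ->
      `|\det (colsub g1 (rowsub f A))| = `|\det (colsub g2 (rowsub f A))|.

Definition te_set (m n : nat) (A : 'M[rat]_(m, n)) : Prop :=
  row_free A /\ pm01 A /\ totally_equimodular A.

Definition tu_set (m n : nat) (A : 'M[rat]_(m, n)) : Prop :=
  row_free A /\ pm01 A /\ totally_unimodular A.

Definition te_lace (m n : nat) (A : 'M[rat]_(m, n)) : Prop :=
  te_set A /\ ~ tu_set A /\
  (forall (k : nat) (f : 'I_k -> 'I_m), injective f -> (k < m)%N ->
     tu_set (rowsub f A)).

Definition supp (n : nat) (x : 'rV[rat]_n) : {set 'I_n} :=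
  [set j | x 0 j != 0].

(* pivoting A/(i,j): divide row i by A i j, then subtract multiples of it
   from the other rows so that column j becomes the i-th unit vector *)
Definition pivot (m n : nat) (A : 'M[rat]_(m, n)) (i : 'I_m) (j : 'I_n)
  : 'M[rat]_(m, n) :=
  \matrix_(k, c) (if k == i then A i c / A i j
                  else A k c - A k j * (A i c / A i j)).

Definition mx2 (n : nat) (a b : 'rV[rat]_n) : 'M[rat]_(2, n) :=
  \matrix_(i < 2) (if i == 0 then a else b).

Definition mx3 (n : nat) (a b c : 'rV[rat]_n) : 'M[rat]_(3, n) :=
  \matrix_(i < 3) (if val i == 0%N then a else if val i == 1%N then b else c).

(* Main.v *)
Require Import Defs.
From mathcomp Require Import all_boot all_order all_algebra.
From mathcomp Require Import ring.
From Stdlib Require Import Classical.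
Import Order.TTheory GRing.Theory Num.Theory.
Local Open Scope ring_scope.
Set Implicit Arguments. Unset Strict Implicit.

Lemma ordE' n (i : 'I_n) v (H : (v < n)%N) : val i = v -> i = Ordinal H.
Proof. by move=> e; apply/val_inj. Qed.
Ltac normi := repeat match goal with
 | |- context [@fun_of_matrix ?R ?m ?n ?A ?i ?j] =>
   lazymatch i with Ordinal _ => lazymatch j with Ordinal _ => fail | _ =>
     let v := eval vm_compute in (nat_of_ord j) in
     rewrite (@ordE' n j v isT erefl) end
   | _ =>
     let v := eval vm_compute in (nat_of_ord i) in
     rewrite (@ordE' m i v isT erefl) end
 end.
Lemma det2 (A : 'M[rat]_2) : \det A = A 0 0 * A 1 1 - A 0 1 * A 1 0.
Proof.
rewrite (expand_det_row _ 0) !big_ord_recl big_ord0 /cofactor !det_mx11 !mxE /=.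
normi. rewrite /= expr0 expr1. ring.
Qed.
Lemma det3 (A : 'M[rat]_3) : \det A = A 0 0 * (A 1 1 * A 2 2 - A 1 2 * A 2 1) - A 0 1 * (A 1 0 * A 2 2 - A 1 2 * A 2 0) + A 0 2 * (A 1 0 * A 2 1 - A 1 1 * A 2 0).
Proof.
rewrite (expand_det_row _ 0) !big_ord_recl big_ord0 /cofactor !det2 !mxE /=.
normi. rewrite /= !exprS expr0. ring.
Qed.

Definition pmv (v : rat) := v = 0 \/ v = 1 \/ v = -1.
Definition V : seq rat := [:: 0; 1; -1].
Lemma pmvP v : pmv v <-> v \in V.
Proof.
rewrite /pmv !inE; split.
  by case=> [->|[->|->]]; rewrite eqxx ?orbT.
by case/orP=> [/eqP->|/orP[/eqP->|/eqP->]]; auto.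
Qed.

Lemma row_free_rowsub m n k (A : 'M[rat]_(m,n)) (f : 'I_k -> 'I_m) :
  injective f -> row_free A -> row_free (rowsub f A).
Proof.
move=> finj rf; apply/inj_row_free => v.
rewrite rowsubE mulmxA -(mul0mx 1 A) => /(row_free_inj rf) h.
apply/rowP => t; have := congr1 (fun w : 'rV_m => w 0 (f t)) h.
rewrite !mxE (bigD1 t) //= big1 ?addr0.
  by rewrite !mxE eqxx mulr1.
by move=> i ne; rewrite !mxE (inj_eq finj) (negbTE ne) mulr0.
Qed.

Lemma pm01_rowsub m n k (A : 'M[rat]_(m,n)) (f : 'I_k -> 'I_m) :
  pm01 A -> pm01 (rowsub f A).
Proof. by move=> h i j; rewrite mxE. Qed.

Lemma te_rowsub m n k (A : 'M[rat]_(m,n)) (f : 'I_k -> 'I_m) :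
  injective f -> totally_equimodular A -> totally_equimodular (rowsub f A).
Proof.
move=> finj te k' f' inj' rf g1 g2; rewrite -rowsub_comp.
apply: te => //; last by rewrite rowsub_comp.
exact: inj_comp.
Qed.

Definition minors2 m n (A : 'M[rat]_(m,n)) :=
  forall i1 i2 c d, i1 != i2 -> pmv (A i1 c * A i2 d - A i1 d * A i2 c).

Arguments minors2 {m n}.
Lemma minors2_rowsub m n k (A : 'M[rat]_(m,n)) (f : 'I_k -> 'I_m) :
  injective f -> minors2 A -> minors2 (rowsub f A).
Proof.
move=> finj h i1 i2 c d ne; rewrite !mxE; apply: h.
by rewrite (inj_eq finj).
Qed.

Lemma tu_small m n (A : 'M[rat]_(m,n)) :
  pm01 A -> (m <= 2)%N -> minors2 A -> totally_unimodular A.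
Proof.
move=> p01 m2 hm k f g /=.
have [[i1 [i2 [ne e]]]|ninj] := classic (exists i1 i2, i1 != i2 /\ f i1 = f i2).
  left; apply: (determinant_alternate ne) => c; by rewrite !mxE e.
have finj : injective f.
  move=> x y fxy; apply/eqP; apply/negPn/negP => nxy; apply: ninj; by exists x, y.
have := leq_card f finj; rewrite !card_ord => km.
case: k f g finj km {ninj} => [|[|[|k]]] f g finj km.
- by rewrite det_mx00; auto.
- rewrite det_mx11 mxE; exact: p01.
- rewrite det2 !mxE; apply: hm. by rewrite (inj_eq finj).
- exfalso; move: (leq_trans km m2); by [].
Qed.
Definition m2 (xc xd yc yd : rat) := xc * yd - xd * yc.
Definition piv (x xj lc lj : rat) := x - xj * (lc / lj).
Definition h2 (lj rj sj lc rc sc : rat) := (piv rc rj lc lj != 0) == (piv sc sj lc lj != 0).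
Definition W2 : seq rat := [:: 2; -2].
Definition W1 : seq rat := [:: 1; -1].

Ltac fin := intros; repeat (apply/andP; split); assumption.

Lemma allLA1 : all (fun lj => all (fun rj => all (fun sj => all (fun ld => all (fun rd => all (fun sd =>
  [&& lj != 0, rj != 0, sj != 0, m2 lj ld rj rd \in V, h2 lj rj sj ld rd sd,
      m2 rj rd sj sd \in V & sd != sj * rj * rd] ==> (m2 lj ld sj sd \in W2)) V) V) V) V) V) V.
Proof. by vm_compute. Qed.
Lemma LA1 lj rj sj ld rd sd : lj \in V -> rj \in V -> sj \in V -> ld \in V -> rd \in V -> sd \in V ->
  lj != 0 -> rj != 0 -> sj != 0 -> m2 lj ld rj rd \in V -> h2 lj rj sj ld rd sd ->
  m2 rj rd sj sd \in V -> sd != sj * rj * rd -> m2 lj ld sj sd \in W2.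
Proof.
move=> a1 a2 a3 a4 a5 a6; move: allLA1 => /allP/(_ _ a1)/allP/(_ _ a2)/allP/(_ _ a3)
  /allP/(_ _ a4)/allP/(_ _ a5)/allP/(_ _ a6)/implyP H; intros; apply: H; fin.
Qed.

Lemma allLA2 : all (fun lj => all (fun rj => all (fun sj => all (fun le => all (fun re => all (fun se =>
  [&& lj != 0, rj != 0, sj != 0, m2 lj le rj re \in V, h2 lj rj sj le re se
      & m2 lj le sj se \notin W1] ==> (se == 2*(sj*rj)*re - (sj*lj)*le)) V) V) V) V) V) V.
Proof. by vm_compute. Qed.
Lemma LA2 lj rj sj le re se : lj \in V -> rj \in V -> sj \in V -> le \in V -> re \in V -> se \in V ->
  lj != 0 -> rj != 0 -> sj != 0 -> m2 lj le rj re \in V -> h2 lj rj sj le re se ->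
  m2 lj le sj se \notin W1 -> se == 2*(sj*rj)*re - (sj*lj)*le.
Proof.
move=> a1 a2 a3 a4 a5 a6; move: allLA2 => /allP/(_ _ a1)/allP/(_ _ a2)/allP/(_ _ a3)
  /allP/(_ _ a4)/allP/(_ _ a5)/allP/(_ _ a6)/implyP H; intros; apply: H; fin.
Qed.

Lemma allLB : all (fun lj => all (fun lc => all (fun ld => all (fun sc => all (fun sd =>
  [&& lj != 0 & m2 lc ld sc sd \notin V] ==> (m2 lc ld sc sd \in W2) && (m2 lj lc 0 sc \in W1)) V) V) V) V) V.
Proof. by vm_compute. Qed.
Lemma LB lj lc ld sc sd : lj \in V -> lc \in V -> ld \in V -> sc \in V -> sd \in V ->
  lj != 0 -> m2 lc ld sc sd \notin V -> (m2 lc ld sc sd \in W2) && (m2 lj lc 0 sc \in W1).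
Proof.
move=> a1 a2 a3 a4 a5; move: allLB => /allP/(_ _ a1)/allP/(_ _ a2)/allP/(_ _ a3)
  /allP/(_ _ a4)/allP/(_ _ a5)/implyP H; intros; apply: H; fin.
Qed.

Lemma allLC1 : all (fun lj => all (fun rj => all (fun lb => all (fun rb => all (fun sb =>
  all (fun lc => all (fun rc => all (fun sc =>
  [&& lj != 0, rj != 0, m2 lj lb rj rb \in V, h2 lj rj 0 lb rb sb, (lb != 0) ==> (rb != 0), sb != 0,
      m2 lj lc rj rc \in V, h2 lj rj 0 lc rc sc, (lc != 0) ==> (rc != 0) & m2 rb rc sb sc \in V]
  ==> (sc == (sb*rb)*rc - (sb*rb)*(rj*lj)*lc)) V) V) V) V) V) V) V) V.
Proof. by vm_compute. Qed.
Lemma LC1 lj rj lb rb sb lc rc sc : lj \in V -> rj \in V -> lb \in V -> rb \in V -> sb \in V ->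
  lc \in V -> rc \in V -> sc \in V ->
  lj != 0 -> rj != 0 -> m2 lj lb rj rb \in V -> h2 lj rj 0 lb rb sb -> (lb != 0) ==> (rb != 0) ->
  sb != 0 -> m2 lj lc rj rc \in V -> h2 lj rj 0 lc rc sc -> (lc != 0) ==> (rc != 0) ->
  m2 rb rc sb sc \in V -> sc == (sb*rb)*rc - (sb*rb)*(rj*lj)*lc.
Proof.
move=> a1 a2 a3 a4 a5 a6 a7 a8; move: allLC1 => /allP/(_ _ a1)/allP/(_ _ a2)/allP/(_ _ a3)
  /allP/(_ _ a4)/allP/(_ _ a5)/allP/(_ _ a6)/allP/(_ _ a7)/allP/(_ _ a8)/implyP H; intros; apply: H; fin.
Qed.

Lemma allLC2 : all (fun lj => all (fun rj => all (fun la => all (fun ra => all (fun sa =>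
  all (fun lc => all (fun rc => all (fun sc =>
  [&& lj != 0, rj != 0, m2 lj la rj ra \in V, h2 lj rj 0 la ra sa, (ra != 0) ==> (la != 0), sa != 0,
      m2 lj lc rj rc \in V, h2 lj rj 0 lc rc sc, (rc != 0) ==> (lc != 0) & m2 la lc sa sc \in V]
  ==> (sc == (sa*la)*lc - (sa*la)*(rj*lj)*rc)) V) V) V) V) V) V) V) V.
Proof. by vm_compute. Qed.
Lemma LC2 lj rj la ra sa lc rc sc : lj \in V -> rj \in V -> la \in V -> ra \in V -> sa \in V ->
  lc \in V -> rc \in V -> sc \in V ->
  lj != 0 -> rj != 0 -> m2 lj la rj ra \in V -> h2 lj rj 0 la ra sa -> (ra != 0) ==> (la != 0) ->
  sa != 0 -> m2 lj lc rj rc \in V -> h2 lj rj 0 lc rc sc -> (rc != 0) ==> (lc != 0) ->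
  m2 la lc sa sc \in V -> sc == (sa*la)*lc - (sa*la)*(rj*lj)*rc.
Proof.
move=> a1 a2 a3 a4 a5 a6 a7 a8; move: allLC2 => /allP/(_ _ a1)/allP/(_ _ a2)/allP/(_ _ a3)
  /allP/(_ _ a4)/allP/(_ _ a5)/allP/(_ _ a6)/allP/(_ _ a7)/allP/(_ _ a8)/implyP H; intros; apply: H; fin.
Qed.

Lemma allLC3 : all (fun lj => all (fun rj => all (fun la => all (fun sa => all (fun rb => all (fun sb =>
  all (fun lc => all (fun rc => all (fun sc =>
  [&& lj != 0, rj != 0, la != 0, h2 lj rj 0 la 0 sa, rb != 0, h2 lj rj 0 0 rb sb,
      lj*rb*sa + la*rj*sb \in V, m2 lj lc rj rc \in V, h2 lj rj 0 lc rc sc,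
      m2 rb rc sb sc \in V & m2 la lc sa sc \in V]
  ==> (sc == (sb*rb)*rc - (sb*rb)*(rj*lj)*lc)) V) V) V) V) V) V) V) V) V.
Proof. Time by vm_compute. Qed.
Lemma LC3 lj rj la sa rb sb lc rc sc : lj \in V -> rj \in V -> la \in V -> sa \in V -> rb \in V ->
  sb \in V -> lc \in V -> rc \in V -> sc \in V ->
  lj != 0 -> rj != 0 -> la != 0 -> h2 lj rj 0 la 0 sa -> rb != 0 -> h2 lj rj 0 0 rb sb ->
  lj*rb*sa + la*rj*sb \in V -> m2 lj lc rj rc \in V -> h2 lj rj 0 lc rc sc ->
  m2 rb rc sb sc \in V -> m2 la lc sa sc \in V -> sc == (sb*rb)*rc - (sb*rb)*(rj*lj)*lc.
Proof.
move=> a1 a2 a3 a4 a5 a6 a7 a8 a9; move: allLC3 => /allP/(_ _ a1)/allP/(_ _ a2)/allP/(_ _ a3)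
  /allP/(_ _ a4)/allP/(_ _ a5)/allP/(_ _ a6)/allP/(_ _ a7)/allP/(_ _ a8)/allP/(_ _ a9)/implyP H;
  intros; apply: H; fin.
Qed.

Lemma allW : all (fun x => all (fun y => `|x| != `|y|) W1) W2.
Proof. by vm_compute. Qed.
Lemma W21 x y : x \in W2 -> y \in W1 -> `|x| = `|y| -> False.
Proof. move=> a1 a2; move: allW => /allP/(_ _ a1)/allP/(_ _ a2)/eqP; done. Qed.

Lemma W2nz x : x \in W2 -> x != 0.
Proof. by rewrite !inE => /orP[]/eqP->. Qed.
Lemma W1nz x : x \in W1 -> x != 0.
Proof. by rewrite !inE => /orP[]/eqP->. Qed.
Lemma pmvN v : pmv v -> pmv (- v).
Proof. by case=> [->|[->|->]]; rewrite ?oppr0 ?opprK; [left|right;right|right;left]. Qed.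

Definition ix2 {T} (a b : T) : 'I_2 -> T := fun i => if val i == 0%N then a else b.
Definition ix3 {T} (a b c : T) : 'I_3 -> T :=
  fun i => if val i == 0%N then a else if val i == 1%N then b else c.

Theorem mainTheorem8 (n : nat) (l r s : 'rV[rat]_n) (j : 'I_n) :
  te_set (mx3 l r s) ->
  tu_set (mx2 l r) ->
  (2 <= #|supp l|)%N -> (2 <= #|supp r|)%N -> (2 <= #|supp s|)%N ->
  j \in supp r :&: supp l ->
  supp (row (@Ordinal 3 1 isT) (pivot (mx3 l r s) (@Ordinal 3 0 isT) j))
    = supp (row (@Ordinal 3 2 isT) (pivot (mx3 l r s) (@Ordinal 3 0 isT) j)) ->
  te_lace (mx2 r s) \/ te_lace (mx3 l r s).
Proof.
move=> [rfM [pmM teM]] [rflr [pmlr tulr]] _ _ suppS jin Hsupp.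

have pl c : pmv (l 0 c) by have := pmM 0 c; rewrite mxE.
have pr c : pmv (r 0 c) by have := pmM 1 c; rewrite mxE.
have ps c : pmv (s 0 c) by have := pmM 2 c; rewrite mxE.
have H1 c d : pmv (l 0 c * r 0 d - l 0 d * r 0 c).
  by have := tulr 2 (ix2 0 1) (ix2 c d); rewrite /= det2 !mxE.
have lj : l 0 j != 0 by move: jin; rewrite !inE => /andP[].
have rj : r 0 j != 0 by move: jin; rewrite !inE => /andP[].
have H2 c : (r 0 c - r 0 j * (l 0 c / l 0 j) != 0) = (s 0 c - s 0 j * (l 0 c / l 0 j) != 0).
  by have := congr1 (fun A : {set 'I_n} => c \in A) Hsupp; rewrite !inE !mxE /=.
have TE c d c' d' : l 0 c * s 0 d - l 0 d * s 0 c != 0 ->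
    l 0 c' * s 0 d' - l 0 d' * s 0 c' != 0 ->
    `|l 0 c * s 0 d - l 0 d * s 0 c| = `|l 0 c' * s 0 d' - l 0 d' * s 0 c'|.
  have finj : injective (ix2 (0 : 'I_3) 2).
    by move=> x y; rewrite /ix2; case: x => [[|[|x]] px]; case: y => [[|[|y]] py] //= _; apply/val_inj.
  have := teM 2 _ finj (row_free_rowsub finj rfM) (ix2 c d) (ix2 c' d').
  by rewrite !det2 !mxE /=.
have Frf a b : ~ (forall c, s 0 c = a * l 0 c + b * r 0 c).
  move=> hc.
  pose v : 'rV[rat]_3 := \row_(i < 3) ix3 a b (-1) i.
  have : v *m mx3 l r s = 0 *m mx3 l r s.
    apply/rowP => c; rewrite mul0mx !mxE !big_ord_recl big_ord0 !mxE /= hc.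
    rewrite /ix3 /=; ring.
  move/(row_free_inj rfM) => /rowP /(_ 2); rewrite !mxE /=.
  by move/eqP; rewrite oppr_eq0.
have [b0 sb0] : exists b0, s 0 b0 != 0.
  have : supp s != set0 by rewrite -cards_eq0; case: #|supp s| suppS.
  by case/set0Pn => x; rewrite inE; exists x.
have pl' c : l 0 c \in V := (pmvP _).1 (pl c).
have pr' c : r 0 c \in V := (pmvP _).1 (pr c).
have ps' c : s 0 c \in V := (pmvP _).1 (ps c).
have H1' c d : m2 (l 0 c) (l 0 d) (r 0 c) (r 0 d) \in V := (pmvP _).1 (H1 c d).
have H2' c : h2 (l 0 j) (r 0 j) (s 0 j) (l 0 c) (r 0 c) (s 0 c) by rewrite /h2 /piv H2 eqxx.
have [H3|nH3] := classic (forall c d, pmv (r 0 c * s 0 d - r 0 d * s 0 c)).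
2:{
  have e2 : mx2 r s = rowsub (ix2 (1:'I_3) 2) (mx3 l r s).
    by apply/matrixP => i c; rewrite !mxE /ix2; case: i => [[|[|i]] hi].
  have finj : injective (ix2 (1:'I_3) 2).
    by move=> x y; rewrite /ix2; case: x => [[|[|x]] px]; case: y => [[|[|y]] py] //= _; apply/val_inj.
  left; split; [|split].
  - rewrite e2; split; [exact: row_free_rowsub | split; [exact: pm01_rowsub | exact: te_rowsub]].
  - case=> _ [_ tu].
    have [c [d hcd]] : exists c d, ~ pmv (r 0 c * s 0 d - r 0 d * s 0 c).
      apply: NNPP => h; apply: nH3 => c d; apply: NNPP => h'; apply: h; by exists c, d.
    apply: hcd; have := tu 2 (ix2 0 1) (ix2 c d); by rewrite /= det2 !mxE.
  - move=> k f fi kl; rewrite e2 -rowsub_comp.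
    have ci := inj_comp finj fi.
    split; [exact: row_free_rowsub | split; [exact: pm01_rowsub|]].
    apply: tu_small; [exact: pm01_rowsub | by apply: ltnW |].
    move=> i1 i2 c d ne; exfalso; move: ne; case: k f fi ci kl i1 i2 => [|[|k]] f fi ci kl [[|?] ?] [[|?] ?] //.
}
have H3' c d : m2 (r 0 c) (r 0 d) (s 0 c) (s 0 d) \in V := (pmvP _).1 (H3 c d).
have sj0 : s 0 j = 0.
  case: (eqVneq (s 0 j) 0) => // sjn; exfalso.
  have [[d hd]|alld] := classic (exists d, s 0 d != s 0 j * r 0 j * r 0 d).
    have Md := LA1 (pl' j) (pr' j) (ps' j) (pl' d) (pr' d) (ps' d) lj rj sjn (H1' j d) (H2' d) (H3' j d) hd.
    have [[e he]|alle] := classic (exists e, m2 (l 0 j) (l 0 e) (s 0 j) (s 0 e) \in W1).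
      apply: (W21 Md he); apply: TE; [exact: W2nz Md | exact: W1nz he].
    apply: (Frf (-(s 0 j * l 0 j)) (2*(s 0 j * r 0 j))) => c.
    have nc : m2 (l 0 j) (l 0 c) (s 0 j) (s 0 c) \notin W1.
      by apply/negP => h; apply: alle; exists c.
    move/eqP: (LA2 (pl' j) (pr' j) (ps' j) (pl' c) (pr' c) (ps' c) lj rj sjn (H1' j c) (H2' c) nc) => ->.
    ring.
  apply: (Frf 0 (s 0 j * r 0 j)) => c.
  have : ~~ (s 0 c != s 0 j * r 0 j * r 0 c) by apply/negP => h; apply: alld; exists c.
  rewrite negbK => /eqP ->; ring.
have H2'' c : h2 (l 0 j) (r 0 j) 0 (l 0 c) (r 0 c) (s 0 c) by rewrite -sj0.
have G1 c d : pmv (l 0 c * s 0 d - l 0 d * s 0 c).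
  apply/pmvP; apply/negPn/negP => hn.
  have /andP[h2' h1'] := LB (pl' j) (pl' c) (pl' d) (ps' c) (ps' d) lj hn.
  apply: (W21 h2' h1'); have := TE c d j c; rewrite sj0; apply; [exact: W2nz h2' | exact: W1nz h1'].
have G1' c d : m2 (l 0 c) (l 0 d) (s 0 c) (s 0 d) \in V := (pmvP _).1 (G1 c d).
have [[a [laa raa]]|noA] := classic (exists a, l 0 a != 0 /\ r 0 a = 0).
2:{ exfalso.
  have AB c : (l 0 c != 0) ==> (r 0 c != 0).
    by apply/implyP => h; apply/negP => /eqP h'; apply: noA; exists c.
  apply: (Frf (-(s 0 b0 * r 0 b0)*(r 0 j * l 0 j)) (s 0 b0 * r 0 b0)) => c.
  move/eqP: (LC1 (pl' j) (pr' j) (pl' b0) (pr' b0) (ps' b0) (pl' c) (pr' c) (ps' c) lj rj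
     (H1' j b0) (H2'' b0) (AB b0) sb0 (H1' j c) (H2'' c) (AB c) (H3' b0 c)) => ->; ring. }
have [[b [lbb rbb]]|noB] := classic (exists b, l 0 b = 0 /\ r 0 b != 0).
2:{ exfalso.
  have BA c : (r 0 c != 0) ==> (l 0 c != 0).
    by apply/implyP => h; apply/negP => /eqP h'; apply: noB; exists c.
  apply: (Frf (s 0 b0 * l 0 b0) (-(s 0 b0 * l 0 b0)*(r 0 j * l 0 j))) => c.
  move/eqP: (LC2 (pl' j) (pr' j) (pl' b0) (pr' b0) (ps' b0) (pl' c) (pr' c) (ps' c) lj rj
     (H1' j b0) (H2'' b0) (BA b0) sb0 (H1' j c) (H2'' c) (BA c) (G1' b0 c)) => ->; ring. }
have H2a : h2 (l 0 j) (r 0 j) 0 (l 0 a) 0 (s 0 a) by move: (H2'' a); rewrite raa.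
have H2b : h2 (l 0 j) (r 0 j) 0 0 (r 0 b) (s 0 b) by move: (H2'' b); rewrite lbb.
have [DV|DnV] := boolP (l 0 j * r 0 b * s 0 a + l 0 a * r 0 j * s 0 b \in V).
  exfalso.
  apply: (Frf (-(s 0 b * r 0 b)*(r 0 j * l 0 j)) (s 0 b * r 0 b)) => c.
  move/eqP: (LC3 (pl' j) (pr' j) (pl' a) (ps' a) (pr' b) (ps' b) (pl' c) (pr' c) (ps' c) lj rj laa
     H2a rbb H2b DV (H1' j c) (H2'' c) (H3' b c) (G1' a c)) => ->; ring.
have nTU : ~ totally_unimodular (mx3 l r s).
  move=> tu; have := tu 3 (ix3 0 1 2) (ix3 j b a); rewrite /= det3 !mxE /= raa lbb sj0.
  move/pmvP; apply/negP.
  rewrite (_ : _ * _ - _ + _ = l 0 j * r 0 b * s 0 a + l 0 a * r 0 j * s 0 b) //; ring.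
have mM : minors2 (mx3 l r s).
  move=> [[|[|[|i1]]] h1] [[|[|[|i2]]] h2] c d //= _; rewrite !mxE /=;
  try (by apply: H1); try (by apply: G1); try (by apply: H3);
  rewrite [X in X - _]mulrC [X in _ - X]mulrC;
  [exact: H1 d c | exact: G1 d c | exact: H3 d c].
right; split; first by split.
split; first by case=> _ [_ tu]; exact: nTU.
move=> k f fi kl.
split; [exact: row_free_rowsub | split; [exact: pm01_rowsub|]].
apply: tu_small; [exact: pm01_rowsub | by [] | exact: minors2_rowsub].
Qed.
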